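(* Let $G=(V,E)$ be a graph and $[W,F]$ a non-maximal utter clique of $G$. Then the inequality $x(W)+y(F\cap E(V\setminus W))-y(E(W))\le 1$ is dominated by (i.e., is implied as a nonnegative combination of) the inequalities $x(W')+y(F'\cap E(V\setminus W'))-y(E(W'))\le 1$ for all maximal utter cliques $[W',F']$ of $G$, $y(\delta(v))\le x_v$ for all $v\in V$, and $-y_e\le 0$ for all $e\in E$.
   Context: All graphs are simple and connected. For $W\subseteq V$, $E(W)$ is the set of edges with both endpoints in $W$, $\delta(v)$ is the set of edges incident to $v$, and $x(A)=\sum_{a\in A}x_a$. The utter graph $u(G)$ has vertex set $V\cup E$, where two elements are adjacent iff: they are two adjacent vertices of $G$; or a vertex and an edge incident to it; or two edges sharing an endpoint; or a vertex $w$ and an edge $uv$ not containing $w$ with $wu\in E$ or $wv\in E$; or two disjoint edges $uv,xy$ such that some edge of $G$ joins $\{u,v\}$ to $\{x,y\}$. For $W\subseteq V$, $F\subseteq E$, $[W,F]$ is an utter clique if $W\cup F$ is a clique of $u(G)$; it is maximal if no element of $V\setminus W$ or $E\setminus F$ can be added while remaining an utter clique. *)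

(* Defs.v *)
From mathcomp Require Import all_boot all_order all_algebra.
Set Implicit Arguments. Unset Strict Implicit. Unset Printing Implicit Defensive.
Import Order.TTheory GRing.Theory Num.Theory.

Definition simple_graph (V : finType) (adj : rel V) : Prop :=
  symmetric adj /\ irreflexive adj.

Definition connected_graph (V : finType) (adj : rel V) : Prop :=
  forall u v : V, connect adj u v.

Definition is_edge (V : finType) (adj : rel V) (e : {set V}) : bool :=
  [exists u, exists v, adj u v && (e == [set u; v])].

Definition edge (V : finType) (adj : rel V) := {e : {set V} | is_edge adj e}.

Section Utter.
Variables (V : finType) (adj : rel V).
Local Notation E := (edge adj).

(* adjacency in the utter graph u(G), on vertex set V + E *)
Definition vv_adj (u v : V) : bool := adj u v.
Definition ve_adj (w : V) (e : E) : bool :=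
  (w \in val e) || [exists u in val e, adj w u].
Definition ee_adj (e f : E) : bool :=
  [exists u in val e, u \in val f] ||
  [exists u in val e, exists v in val f, adj u v].

Definition utter_clique (W : {set V}) (F : {set E}) : Prop :=
  (forall u v, u \in W -> v \in W -> u != v -> vv_adj u v) /\
  (forall w e, w \in W -> e \in F -> ve_adj w e) /\
  (forall e f, e \in F -> f \in F -> e != f -> ee_adj e f).

Definition maximal_utter_clique (W : {set V}) (F : {set E}) : Prop :=
  utter_clique W F /\
  (forall v, v \notin W -> ~ utter_clique (v |: W) F) /\
  (forall e, e \notin F -> ~ utter_clique W (e |: F)).

Variable R : realFieldType.
Local Open Scope ring_scope.

Definition inE_of (W : {set V}) (e : E) : bool := val e \subset W.

Definition clique_lhs (W : {set V}) (F : {set E}) (x : V -> R) (y : E -> R) : R :=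
  \sum_(v in W) x v
  + \sum_(e in F | inE_of (~: W) e) y e
  - \sum_(e : E | inE_of W e) y e.

(* left-hand side of y(δ(v)) <= x_v written as y(δ(v)) - x_v <= 0 *)
Definition star_lhs (v : V) (x : V -> R) (y : E -> R) : R :=
  \sum_(e : E | v \in val e) y e - x v.

End Utter.

(* Main.v *)
Require Import Defs.
From mathcomp Require Import all_boot all_order all_algebra.
From mathcomp Require Import zify ring lra.
From Stdlib Require Import Classical.
Import Order.TTheory GRing.Theory Num.Theory.
Local Open Scope ring_scope.

Lemma extend_max (V : finType) (adj : rel V) :
  forall n (W : {set V}) (F : {set edge adj}),
  (#|~: W| + #|~: F| <= n)%N -> utter_clique W F ->
  exists W' F', maximal_utter_clique W' F' /\ W \subset W' /\ F \subset F'.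
Proof.
elim=> [|n IH] W F Hn Hc.
  exists W, F; split => //; split => //; split => [v|e].
    have : #|~: W| = 0%N by lia.
    by move/eqP; rewrite cards_eq0 => /eqP H0; rewrite -in_setC H0 in_set0.
  have : #|~: F| = 0%N by lia.
  by move/eqP; rewrite cards_eq0 => /eqP H0; rewrite -in_setC H0 in_set0.
destruct (classic (maximal_utter_clique W F)) as [Hm|Hm].
  by exists W, F.
destruct (classic (forall v, v \notin W -> ~ utter_clique (v |: W) F)) as [Hv|Hv];
  last first.
  apply not_all_ex_not in Hv as [v Hv].
  apply imply_to_and in Hv as [Hv1 Hv2]; apply NNPP in Hv2.
  have Hlt : (#|~: (v |: W)| + #|~: F| <= n)%N.
    have E : ~: (v |: W) = (~: W) :\ v.
      by apply/setP => x; rewrite !inE negb_or andbC.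
    have := cardsD1 v (~: W); rewrite E inE Hv1 /= => A; move: Hn; rewrite A add1n addSn ltnS; apply.
  have [W' [F' [HM [H1 H2]]]] := IH (v |: W) F Hlt Hv2.
  exists W', F'; split => //; split => //.
  exact: subset_trans (subsetUr _ _) H1.
destruct (classic (forall e, e \notin F -> ~ utter_clique W (e |: F))) as [He|He].
  by exfalso; apply: Hm.
apply not_all_ex_not in He as [e He].
apply imply_to_and in He as [He1 He2]; apply NNPP in He2.
have Hlt : (#|~: W| + #|~: (e |: F)| <= n)%N.
  have E : ~: (e |: F) = (~: F) :\ e.
    by apply/setP => x; rewrite !inE negb_or andbC.
  have := cardsD1 e (~: F); rewrite E inE He1 /= => A; move: Hn; rewrite A add1n addnS ltnS; apply.
have [W' [F' [HM [H1 H2]]]] := IH W (e |: F) Hlt He2.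
exists W', F'; split => //; split => //.
exact: subset_trans (subsetUr _ _) H2.
Qed.

Lemma sum_cond (R : realFieldType) (I : finType) (P : pred I) (f : I -> R) :
  \sum_(i | P i) f i = \sum_i (P i)%:R * f i.
Proof.
rewrite big_mkcond; apply: eq_bigr => i _; case: (P i); by rewrite ?mul1r ?mul0r.
Qed.

Lemma pair_sum (R : realFieldType) (V : finType) (u v : V) (f : V -> R) :
  u != v -> \sum_w f w * (w \in [set u; v])%:R = f u + f v.
Proof.
move=> Huv.
rewrite (bigD1 u) //= (bigD1 v) /=; last by rewrite eq_sym.
rewrite big1 ?addr0; last first.
  move=> w /andP [Hwu Hwv]; rewrite !inE (negbTE Hwu) (negbTE Hwv) /=.
  by rewrite mulr0.
by rewrite !inE !eqxx ?orbT /= !mulr1.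
Qed.

Lemma nu_ge0 (V : finType) (adj : rel V) (Hs : simple_graph adj)
  (W W' : {set V}) (F F' : {set edge adj}) (R : realFieldType) (e : edge adj) :
  W \subset W' -> F \subset F' ->
  0 <= ((e \in F') && inE_of (~: W') e)%:R - (inE_of W' e)%:R
       + \sum_w ((w \in W') && (w \notin W))%:R * (w \in val e)%:R
       - ((e \in F) && inE_of (~: W) e)%:R + (inE_of W e)%:R :> R.
Proof.
move=> /subsetP HW /subsetP HF.
have /existsP [u /existsP [v /andP [Huv /eqP He]]] := valP e.
have Huv' : u != v.
  by apply/eqP => Eq; move: Huv; rewrite Eq (proj2 Hs).
rewrite /inE_of He pair_sum //.
rewrite !subUset !sub1set !inE.
have HFe := HF e.
have HWu := HW u; have HWv := HW v.
move: HFe HWu HWv.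
case: (e \in F); case: (e \in F'); case: (u \in W); case: (u \in W');
  case: (v \in W); case: (v \in W') => //= HFe HWu HWv;
  try (by have := HFe isT); try (by have := HWu isT); try (by have := HWv isT);
  lra.
Qed.

Theorem mainTheorem2 (V : finType) (adj : rel V)
    (Hsimple : simple_graph adj) (Hconn : connected_graph adj)
    (W : {set V}) (F : {set edge adj})
    (Hcl : utter_clique W F) (Hnmax : ~ maximal_utter_clique W F)
    (R : realFieldType) :
  exists (lam : {set V} * {set edge adj} -> R) (mu : V -> R) (nu : edge adj -> R),
    (forall p, 0 <= lam p) /\ (forall v, 0 <= mu v) /\ (forall e, 0 <= nu e) /\
    (forall p, lam p != 0 -> maximal_utter_clique p.1 p.2) /\
    (forall (x : V -> R) (y : edge adj -> R),
        \sum_(p : {set V} * {set edge adj}) lam p * clique_lhs p.1 p.2 x y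
      + \sum_(v : V) mu v * star_lhs v x y
      + \sum_(e : edge adj) nu e * (- y e)
      = clique_lhs W F x y) /\
    \sum_(p : {set V} * {set edge adj}) lam p * 1 + \sum_(v : V) mu v * 0
      + \sum_(e : edge adj) nu e * 0 <= 1.
Proof.
have [W' [F' [HM [HW HF]]]] := @extend_max V adj _ W F (leqnn _) Hcl.
pose lam (p : {set V} * {set edge adj}) : R := (p == (W', F'))%:R.
pose mu (v : V) : R := ((v \in W') && (v \notin W))%:R.
pose m (e : edge adj) : R := \sum_w mu w * (w \in val e)%:R.
pose nu (e : edge adj) : R :=
  ((e \in F') && inE_of (~: W') e)%:R - (inE_of W' e)%:R + m e
  - ((e \in F) && inE_of (~: W) e)%:R + (inE_of W e)%:R.
have Hlam : forall f : {set V} * {set edge adj} -> R,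
    \sum_p lam p * f p = f (W', F').
  move=> f; rewrite (bigD1 (W', F')) //= big1 ?addr0; first by rewrite /lam eqxx mul1r.
  by move=> p Hp; rewrite /lam (negbTE Hp) mul0r.
exists lam, mu, nu; split; [|split; [|split; [|split; [|split]]]].
- by move=> p; rewrite /lam ler0n.
- by move=> v; rewrite /mu ler0n.
- by move=> e; apply: nu_ge0.
- move=> p; case: (eqVneq p (W', F')) => [-> _ //|Hne]; by rewrite /lam (negbTE Hne) eqxx.
- move=> x y; rewrite Hlam /=.
  rewrite /clique_lhs /star_lhs.
  have Hstar : \sum_v mu v * (\sum_(e : edge adj | v \in val e) y e - x v)
      = \sum_e m e * y e - \sum_v mu v * x v.
    rewrite (eq_bigr (fun v => mu v * (\sum_(e : edge adj | v \in val e) y e) - mu v * x v)); last first.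
      by move=> v _; rewrite mulrBr.
    rewrite sumrB; congr (_ - _).
      rewrite (eq_bigr (fun v => \sum_(e : edge adj) mu v * ((v \in val e)%:R * y e))); last first.
        by move=> v _; rewrite sum_cond mulr_sumr.
      rewrite exchange_big /=; apply: eq_bigr => e _.
      rewrite /m mulr_suml; apply: eq_bigr => v _; by rewrite mulrA.
  rewrite Hstar.
  rewrite (@sum_cond _ _ (fun v => v \in W')) (@sum_cond _ _ (fun v => v \in W)).
  rewrite (@sum_cond _ _ (fun e => (e \in F') && inE_of (~: W') e)).
  rewrite (@sum_cond _ _ (fun e => (e \in F) && inE_of (~: W) e)).
  rewrite (@sum_cond _ _ (inE_of W')) (@sum_cond _ _ (inE_of W)).
  have h1 : \sum_i (i \in W')%:R * x i - \sum_v mu v * x v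
           = \sum_i (i \in W)%:R * x i.
    rewrite -sumrB; apply: eq_bigr => v _; rewrite /mu.
    have := subsetP HW v.
    by case: (v \in W); case: (v \in W') => /= H; rewrite ?mul1r ?mul0r ?subr0 ?subrr //; have := H isT.
  have h2 : \sum_i ((i \in F') && inE_of (~: W') i)%:R * y i
            - \sum_i (inE_of W' i)%:R * y i + \sum_e m e * y e
            + \sum_e nu e * - y e
          = \sum_i ((i \in F) && inE_of (~: W) i)%:R * y i
            - \sum_i (inE_of W i)%:R * y i.
    rewrite -sumrB -!big_split -sumrB; apply: eq_bigr => e _; rewrite /nu /=.
    ring.
  lra.
- rewrite Hlam !big1 ?addr0 ?mulr1 // => i _; by rewrite mulr0.
Qed.
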